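(* Let $d\ge2$ be an integer and $p$ a prime with $p\equiv 3\pmod 4$. Let $\alpha_n=\frac{(1/2)_n}{n!}$, where $(x)_n=x(x+1)\cdots(x+n-1)$, let $F_p(z)=\sum_{n=0}^{p-1}\alpha_n^d z^n$ and $\epsilon_p=(-1)^{d(p-1)/2}$. Then $$F_p(-\epsilon_p)\equiv 0\pmod{p}.$$
   Context: Congruences are in the ring $\mathbb{Z}_{(p)}$ of $p$-integral rationals. *)

(* Defs.v *)
From mathcomp Require Import all_boot all_order all_algebra.
Set Implicit Arguments. Unset Strict Implicit. Unset Printing Implicit Defensive.
Import Order.TTheory GRing.Theory Num.Theory.
Local Open Scope ring_scope.

Definition pochhammer (x : rat) (n : nat) : rat := \prod_(i < n) (x + i%:R).

Definition alpha (n : nat) : rat := pochhammer (1 / 2%:R) n / (n`!)%:R.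

Definition Fp (d p : nat) (z : rat) : rat := \sum_(n < p) alpha n ^+ d * z ^+ n.

Definition eps (d p : nat) : rat := (-1) ^+ (d * (p.-1) %/ 2).

(* r = 0 mod p in Z_(p): r is p-integral (p does not divide the reduced
   denominator) and p divides its reduced numerator. *)
Definition pcong0 (p : nat) (r : rat) : Prop :=
  ~~ (p%:Z %| denq r)%Z /\ (p%:Z %| numq r)%Z.

(* Main.v *)
Require Import Defs.
From mathcomp Require Import all_boot all_order all_algebra.
From mathcomp Require Import zify ring lra.
Import GRing.Theory Num.Theory.
Local Open Scope ring_scope.

Definition oddf (n : nat) : nat := (\prod_(i < n) (i.*2.+1))%N.
Lemma oddfS n : oddf n.+1 = (oddf n * n.*2.+1)%N.
Proof. by rewrite /oddf big_ord_recr. Qed.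

Lemma fact_unit p n : prime p -> (n < p)%N -> ~~ (p %| n`!)%N.
Proof.
move=> pp; elim: n => [|n IH] hn.
  by rewrite fact0 dvdn1; apply/eqP => h; move: (prime_gt1 pp); rewrite h.
rewrite factS Euclid_dvdM // negb_or IH ?andbT; last by apply: ltnW.
by apply/negP => /dvdn_leq => /(_ isT); rewrite leqNgt hn.
Qed.

Lemma oddfK p m n : prime p -> p = m.*2.+1 ->
  (oddf n)%:R = (-2) ^+ n * (m ^_ n)%:R :> 'F_p.
Proof.
move=> pp hpm.
have hp : (m.*2.+1)%:R = 0 :> 'F_p by rewrite -hpm pchar_Fp_0.
elim: n => [|n IH]; first by rewrite /oddf big_ord0 ffactn0 expr0 mulr1.
rewrite oddfS ffactnSr !natrM IH exprS.
case: (leqP n m) => hnm.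
  rewrite natrB //.
  have -> : (n.*2.+1)%:R = 2 * n%:R + 1 :> 'F_p.
    by rewrite -[n.*2.+1]addn1 natrD -[n.*2]muln2 natrM mulrC.
  have -> : 2 * n%:R + 1 = 2 * n%:R + 1 - (m.*2.+1)%:R :> 'F_p by rewrite hp subr0.
  rewrite -[m.*2.+1]addn1 natrD -[m.*2]muln2 natrM. ring.
rewrite (ffact_small hnm). ring.
Qed.

Lemma oddfE n : (oddf n * 2 ^ n * n`! = (n.*2)`!)%N.
Proof.
elim: n => [|n IH]; first by rewrite /oddf big_ord0.
rewrite oddfS doubleS !factS -IH expnS.
rewrite -!mul2n. ring.
Qed.

Lemma binE n : ('C(n.*2, n) * (n`! * n`!) = (n.*2)`!)%N.
Proof.
have := @bin_fact n.*2 n; rewrite -addnn addnK; apply; exact: leq_addr.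
Qed.

Lemma binK p m n : prime p -> p = m.*2.+1 -> (n < p)%N ->
  ('C(n.*2, n))%:R = (-4) ^+ n * ('C(m, n))%:R :> 'F_p.
Proof.
move=> pp hpm hn.
have hf : (n`!)%:R != 0 :> 'F_p by rewrite -(dvdn_pcharf (pchar_Fp pp)) fact_unit.
apply: (mulIf hf); apply: (mulIf hf).
rewrite -!mulrA -!natrM binE -oddfE !natrM (@oddfK _ _ n pp hpm) -bin_ffact natrM natrX.
have -> : (-4 : 'F_p) = -2 * 2 by ring.
rewrite exprMn.
set a := (-2 : 'F_p) ^+ n; set b := (2%:R : 'F_p) ^+ n.
rewrite /b. set c := _ ^+ n.
ring.
Qed.
Lemma pcong0_frac p (r : rat) (a b : int) : prime p -> b != 0 ->
  r * b%:~R = a%:~R -> ~~ (p%:Z %| b)%Z -> (p%:Z %| a)%Z -> pcong0 p r.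
Proof.
move=> pp bn0 E npb pa.
have E2 : numq r * b = a * denq r.
  apply: (@intr_inj rat); rewrite !rmorphM /=.
  rewrite -E -[X in _ = X * _ * _](divq_num_den r).
  have : (denq r)%:~R != 0 :> rat by rewrite intr_eq0 denq_neq0.
  move=> h; field; exact: h.
have cop : coprimez (denq r) (numq r).
  by rewrite /coprimez gcdzC; have := coprime_num_den r.
have dvb : (denq r %| b)%Z.
  by rewrite -(Gauss_dvdzr _ cop) E2 dvdz_mull.
split.
  apply/negP => hpd; apply/negP: npb; apply/negPn; exact: dvdz_trans hpd dvb.
have : (p%:Z %| numq r * b)%Z by rewrite E2 dvdz_mulr.
rewrite !dvdzE abszM /= Euclid_dvdM //; case/orP => // hb.
by move: npb; rewrite dvdzE /= hb.
Qed.
Lemma Sint m d p : odd m -> (0 < d)%N -> (m < p)%N ->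
  \sum_(n < p) ('C(m, n)%:R : int) ^+ d * (-1) ^+ n = 0.
Proof.
move=> hm hd hmp.
rewrite -(big_mkord xpredT (fun n => ('C(m, n)%:R : int) ^+ d * (-1) ^+ n)).
rewrite (big_cat_nat _ (n:=m.+1)) //=.
rewrite [X in _ + X]big1_seq ?addr0; last first.
  move=> i /andP[_]; rewrite mem_index_iota => /andP[hi _].
  by rewrite bin_small // mulr0n expr0n eqn0Ngt hd mul0r.
rewrite big_mkord.
set S := \sum_(i < m.+1) _.
have hS : S = - S.
  rewrite {1}/S (reindex_inj rev_ord_inj) /= -sumrN; apply: eq_bigr => i _.
  rewrite subSS bin_sub; last by have := ltn_ord i.
  rewrite -signr_odd oddB; last by have := ltn_ord i.
  rewrite hm -[(-1) ^+ i]signr_odd; case: (odd i) => /=; rewrite ?expr1 ?expr0; ring.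
lia.
Qed.

Lemma sign_simp (R : pzRingType) m d n : odd m ->
  (-1) ^+ (n * d) * (- (-1) ^+ (d * m)) ^+ n = (-1) ^+ n :> R.
Proof.
move=> hm.
have -> : - (-1) ^+ (d * m) = (-1) ^+ (d * m).+1 :> R by rewrite exprS mulN1r.
rewrite -exprM -exprD -signr_odd -[RHS]signr_odd.
congr (_ ^+ _).
rewrite oddD !oddM /= oddM hm andbT.
by case: (odd n); case: (odd d).
Qed.
Lemma pochE n : pochhammer (1 / 2%:R) n = (oddf n)%:R / 2%:R ^+ n.
Proof.
elim: n => [|n IH]; first by rewrite /pochhammer /oddf !big_ord0 expr0 divr1.
rewrite /pochhammer big_ord_recr /= -/(pochhammer _ _) IH oddfS natrM exprS.
have -> : (n.*2.+1)%:R = 2 * n%:R + 1 :> rat.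
  by rewrite -addn1 natrD -muln2 natrM mulrC.
field.
by rewrite expf_neq0.
Qed.

Lemma alphaE n : alpha n = ('C(n.*2, n))%:R / 4%:R ^+ n.
Proof.
rewrite /alpha pochE.
have H : ('C(n.*2, n))%:R * ((n`!)%:R * (n`!)%:R) = (oddf n)%:R * 2%:R ^+ n * (n`!)%:R :> rat.
  by rewrite -!natrM -natrX -!natrM binE oddfE.
have hf : (n`!)%:R != 0 :> rat by rewrite pnatr_eq0 -lt0n fact_gt0.
have -> : 4%:R ^+ n = 2%:R ^+ n * 2%:R ^+ n :> rat by rewrite -exprMn -natrM.
apply: (mulIf hf); apply: (mulIf hf).
rewrite -[in RHS]mulrA [in RHS]mulrAC H. field.
by rewrite hf expf_neq0.
Qed.

Definition NR (R : pzRingType) (d p : nat) : R :=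
  \sum_(n < p) ('C(n.*2, n)%:R) ^+ d * (- (-1) ^+ (d * (p.-1) %/ 2)) ^+ n
     * 4%:R ^+ ((p.-1 - n) * d).

Lemma NR_map (R S : pzRingType) (f : {rmorphism R -> S}) d p :
  f (NR R d p) = NR S d p.
Proof.
rewrite /NR rmorph_sum; apply: eq_bigr => i _.
by rewrite !rmorphM !rmorphXn rmorphN rmorphXn rmorphN1 !rmorph_nat.
Qed.

Lemma FpE d p : Fp d p (- eps d p) * 4%:R ^+ (p.-1 * d) = NR rat d p.
Proof.
rewrite /Fp /NR mulr_suml; apply: eq_bigr => i _.
rewrite alphaE /eps.
have hi : (i <= p.-1)%N by have := ltn_ord i; lia.
have -> : (p.-1 * d = i * d + (p.-1 - i) * d)%N by rewrite -mulnDl subnKC.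
rewrite exprD expr_div_n -exprM.
have h4 : (4%:R : rat) ^+ (i * d) != 0 by rewrite expf_neq0.
set a := (4%:R : rat) ^+ (i * d) in h4 *.
set b := (4%:R : rat) ^+ ((p.-1 - i) * d).
field; exact: h4.
Qed.

Lemma NRK p m d : prime p -> p = m.*2.+1 -> odd m -> (0 < d)%N -> NR 'F_p d p = 0.
Proof.
move=> pp hpm hm hd.
have hdm : (d * (p.-1) %/ 2 = d * m)%N by rewrite hpm /= -muln2 mulnA mulnK.
rewrite /NR hdm.
rewrite (eq_bigr (fun n : 'I_p => 4%:R ^+ (p.-1 * d) * (('C(m, n)%:R) ^+ d * (-1) ^+ n))); last first.
  move=> i _.
  have hi : (i <= p.-1)%N by have := ltn_ord i; lia.
  rewrite (@binK _ _ i pp hpm (ltn_ord i)).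
  have -> : (-4 : 'F_p) = -1 * 4 by ring.
  rewrite !exprMn -!exprM.
  have e : (p.-1 * d = i * d + (p.-1 - i) * d)%N by rewrite -mulnDl subnKC.
  rewrite -(@sign_simp _ m d i hm) e exprD.
  set a := (-1 : 'F_p) ^+ (i * d).
  set b := (- (-1) ^+ (d * m)) ^+ i.
  set c := (4%:R : 'F_p) ^+ (i * d).
  ring.
rewrite -mulr_sumr.
have -> : \sum_(i < p) ('C(m, i)%:R : 'F_p) ^+ d * (-1) ^+ i
   = (\sum_(i < p) ('C(m, i)%:R : int) ^+ d * (-1) ^+ i)%:~R.
  rewrite rmorph_sum; apply: eq_bigr => i _.
  by rewrite rmorphM !rmorphXn rmorphN1 rmorph_nat.
rewrite Sint // ?mulr0 //.
rewrite hpm; lia.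
Qed.

Theorem corollary2p4 (d p : nat) :
  (2 <= d)%N -> prime p -> (p %% 4 = 3)%N ->
  pcong0 p (Fp d p (- eps d p)).
Proof.
move=> hd pp hp4.
have hpk : p = ((p %/ 4).*2.+1).*2.+1 by rewrite {1}(divn_eq p 4) hp4; lia.
set m := (p %/ 4).*2.+1 in hpk.
have hm : odd m by rewrite /m /= odd_double.
have hd0 : (0 < d)%N by apply: leq_trans hd.
set N := NR int d p.
have NK : (N%:~R : 'F_p) = 0.
  by rewrite (@NR_map int 'F_p intr) (@NRK _ _ _ pp hpk hm hd0).
have hN : (p%:Z %| N)%Z.
  suff h : (p %| `|N|)%N by rewrite dvdzE.
  move: NK; rewrite {1}[N]intEsign rmorphM rmorph_sign /= => /eqP.
  rewrite mulf_eq0 signr_eq0 /= => /eqP.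
  by move/eqP; rewrite -(dvdn_pcharf (pchar_Fp pp)).

apply: (@pcong0_frac p _ N (4 ^ (p.-1 * d))%:Z pp).
- by rewrite eqz_nat expn_eq0.
- rewrite /N (@NR_map int rat intr) -FpE; congr (_ * _).
  by rewrite pmulrn -natrX.
- rewrite dvdzE /= Euclid_dvdX //; apply/negP => /andP[h _].
  have hp3 : p = 3%N by have := dvdn_leq (erefl true : (0 < 4)%N) h; lia.
  by move: h; rewrite hp3.
- exact: hN.
Qed.
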